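(* For $i=1,2$, let $l^i,u^i,\hbar^i$ satisfy the standing assumptions below with the same constants $C_\hbar,\underline{c},\overline{c}$, let $\overline{Y}^i\in C^1_G(0,T)$ with $l^i_T\le\hat{\mathbb{E}}[\hbar^i(T,\overline{Y}^i_T)]\le u^i_T$, and let $(Y^i,R^i)\in C^1_G(0,T)\times C^T_B$ be the solution of the backward Skorokhod problem with sublinear expectation associated to $\overline{Y}^i,\hbar^i$ and barriers $l^i,u^i$. Then for any $t\in[0,T]$, $$\begin{aligned}|(R^1_T-R^1_t)-(R^2_T-R^2_t)|&\le\sup_{s\in[t,T]}|\hat{\mathbb{E}}[\overline{Y}^1_s]-\hat{\mathbb{E}}[\overline{Y}^2_s]|+\frac{2\overline{c}}{\underline{c}}\sup_{s\in[t,T]}\hat{\mathbb{E}}[|\overline{Y}^1_s-\overline{Y}^2_s|]\\&\quad+\frac1{\underline{c}}\Big\{\sup_{s\in[t,T]}\max\big[|\overline{H}^1(s,L^1_s(\overline{Y}^2_s),\overline{Y}^2_s)-\overline{H}^2(s,L^1_s(\overline{Y}^2_s),\overline{Y}^2_s)|,\ |\overline{H}^1(s,U^1_s(\overline{Y}^2_s),\overline{Y}^2_s)-\overline{H}^2(s,U^1_s(\overline{Y}^2_s),\overline{Y}^2_s)|\big]\\&\qquad\qquad+\sup_{s\in[t,T]}\max(|l^1_s-l^2_s|,|u^1_s-u^2_s|)\Big\}.\end{aligned}$$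
   Context: Setting: $\hat{\mathbb{E}}$ is the $G$-expectation on $\Omega_T=\{\omega\in C([0,T];\mathbb{R}^d):\omega_0=0\}$; $L^1_G(\Omega_t)$ the completion of bounded Lipschitz cylinder functionals of the canonical process up to $t$ under $\hat{\mathbb{E}}|\cdot|$; $C^1_G(0,T)$ the processes $Y$ with $Y_v\in L^1_G(\Omega_v)$ and $v\mapsto Y_v$ continuous in $\hat{\mathbb{E}}|\cdot|$; $C^T_B$ the deterministic continuous functions on $[0,T]$ of bounded variation starting at $0$. Standing assumptions on $(l,u,\hbar)$: $l,u$ bounded continuous on $[0,T]$ with $\inf_t(u_t-l_t)>0$; $\hbar:[0,T]\times\Omega_T\times\mathbb{R}\to\mathbb{R}$, $(t,y)\mapsto\hbar(t,y)$ uniformly continuous uniformly in $\omega$, strictly increasing in $y$, $\hbar(t,y)\in L^1_G(\Omega_T)$, $\hat{\mathbb{E}}[\lim_{y\downarrow-\infty}\hbar(t,y)]<\inf_sl_s<\sup_su_s<\hat{\mathbb{E}}[\lim_{y\uparrow\infty}\hbar(t,y)]$, $|\hbar(t,y)|\le C_\hbar(1+|y|)$, $\underline{c}|y-y'|\le|\hbar(t,y)-\hbar(t,y')|\le\overline{c}|y-y'|$. For $X\in L^1_G(\Omega_s)$: $\overline{H}^i(s,x,X)=\hat{\mathbb{E}}[\hbar^i(s,x+X-\hat{\mathbb{E}}[X])]$, $L^i_s(X)=(\overline{H}^i)^{-1}(s,\cdot,X)(l^i_s)$, $U^i_s(X)=(\overline{H}^i)^{-1}(s,\cdot,X)(u^i_s)$.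 $(Y,R)\in C^1_G(0,T)\times C^T_B$ solves the backward Skorokhod problem with sublinear expectation associated to $\overline{Y},\hbar,l,u$ if $Y_t=\overline{Y}_t+R_T-R_t$, $l_t\le\hat{\mathbb{E}}[\hbar(t,Y_t)]\le u_t$ for all $t$, and $\int_s^t(\hat{\mathbb{E}}[\hbar(v,Y_v)]-l_v)dR_v\le0$, $\int_s^t(\hat{\mathbb{E}}[\hbar(v,Y_v)]-u_v)dR_v\le0$ for $0\le s\le t\le T$ (such a solution exists and is unique). *)

(* Defs.v *)
From Stdlib Require Import Reals Lra ClassicalEpsilon.
Open Scope R_scope.

(* H : the space of random variables (plays L^1_G(Omega_T)); E : the sublinear expectation. *)
Definition sublinear_expectation {Om : Type}
  (H : (Om -> R) -> Prop) (E : (Om -> R) -> R) : Prop :=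
  (forall c : R, H (fun _ => c)) /\
  (forall X Y, H X -> H Y -> H (fun o => X o + Y o)) /\
  (forall (a : R) X, H X -> H (fun o => a * X o)) /\
  (forall X, H X -> H (fun o => Rabs (X o))) /\
  (forall X Y, H X -> H Y -> (forall o, X o <= Y o) -> E X <= E Y) /\
  (forall c : R, E (fun _ => c) = c) /\
  (forall X Y, H X -> H Y -> E (fun o => X o + Y o) <= E X + E Y) /\
  (forall (a : R) X, 0 <= a -> H X -> E (fun o => a * X o) = a * E X).

(* F t plays L^1_G(Omega_t): nondecreasing in t, contained in H. *)
Definition filtration_in {Om : Type} (T : R)
  (H : (Om -> R) -> Prop) (F : R -> (Om -> R) -> Prop) : Prop :=
  (forall s t X, 0 <= s -> s <= t -> t <= T -> F s X -> F t X) /\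
  (forall t X, 0 <= t <= T -> F t X -> H X).

Definition C1G {Om : Type} (T : R) (E : (Om -> R) -> R)
  (F : R -> (Om -> R) -> Prop) (Y : R -> Om -> R) : Prop :=
  (forall v, 0 <= v <= T -> F v (Y v)) /\
  (forall v, 0 <= v <= T -> forall eps, 0 < eps -> exists delta, 0 < delta /\
     forall w, 0 <= w <= T -> Rabs (w - v) < delta ->
       E (fun o => Rabs (Y w o - Y v o)) < eps).

Definition continuous_on_closed (f : R -> R) (a b : R) : Prop :=
  forall t, a <= t <= b -> forall eps, 0 < eps -> exists d, 0 < d /\
    forall s, a <= s <= b -> Rabs (s - t) < d -> Rabs (f s - f t) < eps.

Definition is_partition (s t : R) (x : nat -> R) (n : nat) : Prop :=
  x O = s /\ x n = t /\ forall i, (i < n)%nat -> x i <= x (S i).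

Fixpoint var_sum (g : R -> R) (x : nat -> R) (n : nat) : R :=
  match n with
  | O => 0
  | S k => var_sum g x k + Rabs (g (x (S k)) - g (x k))
  end.

Definition bounded_variation_on (g : R -> R) (a b : R) : Prop :=
  exists M, forall n x, is_partition a b x n -> var_sum g x n <= M.

Definition CTB (T : R) (Rf : R -> R) : Prop :=
  continuous_on_closed Rf 0 T /\ bounded_variation_on Rf 0 T /\ Rf 0 = 0.

Fixpoint rs_sum (f g : R -> R) (x xi : nat -> R) (n : nat) : R :=
  match n with
  | O => 0
  | S k => rs_sum f g x xi k + f (xi k) * (g (x (S k)) - g (x k))
  end.

Definition RS_integral (f g : R -> R) (s t I : R) : Prop :=
  forall eps, 0 < eps -> exists delta, 0 < delta /\
    forall n x xi, is_partition s t x n ->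
      (forall i, (i < n)%nat -> x i <= xi i <= x (S i) /\ x (S i) - x i < delta) ->
      Rabs (rs_sum f g x xi n - I) < eps.

Definition Hbar {Om : Type} (E : (Om -> R) -> R) (hb : R -> Om -> R -> R)
  (s x : R) (X : Om -> R) : R :=
  E (fun o => hb s o (x + X o - E X)).

(* the (unique, by strict monotonicity) x with f x = c *)
Definition inv_at (f : R -> R) (c : R) : R :=
  epsilon (inhabits 0) (fun x => f x = c).

Definition Lof {Om : Type} (E : (Om -> R) -> R) (hb : R -> Om -> R -> R)
  (l : R -> R) (s : R) (X : Om -> R) : R :=
  inv_at (fun x => Hbar E hb s x X) (l s).

Definition Uof {Om : Type} (E : (Om -> R) -> R) (hb : R -> Om -> R -> R)
  (u : R -> R) (s : R) (X : Om -> R) : R :=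
  inv_at (fun x => Hbar E hb s x X) (u s).

Definition standing_assumptions {Om : Type} (T : R) (H : (Om -> R) -> Prop)
  (l u : R -> R) (hb : R -> Om -> R -> R) (C cl cu : R) : Prop :=
  (exists M, forall t, 0 <= t <= T -> Rabs (l t) <= M /\ Rabs (u t) <= M) /\
  continuous_on_closed l 0 T /\ continuous_on_closed u 0 T /\
  (exists d, 0 < d /\ forall t, 0 <= t <= T -> d <= u t - l t) /\
  (forall eps, 0 < eps -> exists delta, 0 < delta /\
     forall o t t' y y', 0 <= t <= T -> 0 <= t' <= T ->
       Rabs (t - t') < delta -> Rabs (y - y') < delta ->
       Rabs (hb t o y - hb t' o y') < eps) /\
  (forall t o y y', 0 <= t <= T -> y < y' -> hb t o y < hb t o y') /\
  (forall t y, 0 <= t <= T -> H (fun o => hb t o y)) /\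
  (forall t o y, 0 <= t <= T -> Rabs (hb t o y) <= C * (1 + Rabs y)) /\
  (forall t o y y', 0 <= t <= T ->
     cl * Rabs (y - y') <= Rabs (hb t o y - hb t o y') /\
     Rabs (hb t o y - hb t o y') <= cu * Rabs (y - y')).

Definition BSP {Om : Type} (T : R) (E : (Om -> R) -> R)
  (F : R -> (Om -> R) -> Prop) (Ybar : R -> Om -> R) (hb : R -> Om -> R -> R)
  (l u : R -> R) (Y : R -> Om -> R) (Rf : R -> R) : Prop :=
  C1G T E F Y /\ CTB T Rf /\
  (* Y_t = Ybar_t + R_T - R_t  (as elements of L^1_G, i.e. E|difference| = 0) *)
  (forall t, 0 <= t <= T ->
     E (fun o => Rabs (Y t o - (Ybar t o + (Rf T - Rf t)))) = 0) /\
  (forall t, 0 <= t <= T ->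
     l t <= E (fun o => hb t o (Y t o)) <= u t) /\
  (forall s t, 0 <= s -> s <= t -> t <= T -> exists I,
     RS_integral (fun v => E (fun o => hb v o (Y v o)) - l v) Rf s t I /\ I <= 0) /\
  (forall s t, 0 <= s -> s <= t -> t <= T -> exists I,
     RS_integral (fun v => E (fun o => hb v o (Y v o)) - u v) Rf s t I /\ I <= 0).

(* Main.v *)
Require Import Defs.
From Stdlib Require Import Reals Lra Lia ClassicalEpsilon Classical FunctionalExtensionality.
Open Scope R_scope.

Ltac rabs := repeat (match goal with
  | |- context [Rabs ?x] => let h := fresh in destruct (Rcase_abs x) as [h|h];
        [rewrite (Rabs_left x h) | rewrite (Rabs_right x h)]
  | H : context [Rabs ?x] |- _ => let h := fresh in destruct (Rcase_abs x) as [h|h];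
        [rewrite (Rabs_left x h) in H | rewrite (Rabs_right x h) in H] end).

Lemma neg_abs x : - Rabs x <= x.
Proof. rabs; lra. Qed.

Lemma clamp_props a b x y : a <= b -> a <= x <= b ->
  a <= Rmax a (Rmin b y) <= b /\ Rabs (Rmax a (Rmin b y) - x) <= Rabs (y - x).
Proof.
  intros Hab Hx. unfold Rmax, Rmin.
  destruct (Rle_dec b y); destruct (Rle_dec a _); split;
  repeat match goal with H: ~ _ <= _ |- _ => apply Rnot_le_lt in H end; try lra; rabs; lra.
Qed.

Lemma heine_closed (f : R -> R) a b : a <= b -> continuous_on_closed f a b ->
  forall e, 0 < e -> exists d, 0 < d /\ forall x y, a <= x <= b -> a <= y <= b ->
    Rabs (x - y) < d -> Rabs (f x - f y) < e.
Proof.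
  intros Hab Hc e He.
  set (fc := fun x => f (Rmax a (Rmin b x))).
  assert (Hfc : forall x, a <= x <= b -> fc x = f x).
  { intros x Hx. unfold fc. f_equal. unfold Rmax, Rmin.
    destruct (Rle_dec b x); destruct (Rle_dec a _);
    repeat match goal with H: ~ _ <= _ |- _ => apply Rnot_le_lt in H end; lra. }
  assert (Hu : uniform_continuity fc (fun c => a <= c <= b)).
  { apply Heine. apply compact_P3. intros x Hx.
    unfold continuity_pt, continue_in, limit1_in, limit_in. simpl. unfold R_dist.
    intros eps Heps. destruct (Hc x Hx eps Heps) as [d [Hd Hd']].
    exists d. split; [lra|]. intros y [_ Hy].
    destruct (clamp_props a b x y Hab Hx) as [H1 H2].
    rewrite (Hfc x Hx). unfold fc. apply Hd'; auto. lra. }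
  destruct (Hu (mkposreal e He)) as [[d Hd] Hd']. simpl in Hd'.
  exists d. split; auto. intros x y Hx Hy Hxy.
  rewrite <- (Hfc x Hx), <- (Hfc y Hy). apply Hd'; auto.
Qed.

Lemma cont_pt_of (f : R -> R) x :
  (forall e, 0 < e -> exists d, 0 < d /\ forall y, Rabs (y - x) < d -> Rabs (f y - f x) < e) ->
  continuity_pt f x.
Proof.
  intros H. unfold continuity_pt, continue_in, limit1_in, limit_in. simpl. unfold R_dist.
  intros eps Heps. destruct (H eps Heps) as [d [Hd Hd']]. exists d. split; [lra|].
  intros y [_ Hy]. apply Hd'; auto.
Qed.

Lemma var_sum_ge0 g x n : 0 <= var_sum g x n.
Proof. induction n; simpl. lra. pose proof (Rabs_pos (g (x (S n)) - g (x n))). lra. Qed.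

Lemma var_sum_split g x n k :
  var_sum g x (n + k) = var_sum g x n + var_sum g (fun j => x (n + j)%nat) k.
Proof.
  induction k; simpl.
  - rewrite Nat.add_0_r. lra.
  - rewrite Nat.add_succ_r. simpl. rewrite IHk. replace (n + S k)%nat with (S (n + k)) by lia. lra.
Qed.

Lemma rs_sum_lower f g x xi n C th :
  (forall j, (j < n)%nat -> Rabs (f (xi j) - C) <= th) ->
  C * (g (x n) - g (x O)) - th * var_sum g x n <= rs_sum f g x xi n.
Proof.
  induction n; intros Hj; simpl.
  - lra.
  - assert (IH := IHn (fun j Hj' => Hj j (Nat.lt_lt_succ_r _ _ Hj'))).
    assert (H1 := Hj n (Nat.lt_succ_diag_r n)).
    set (u := f (xi n) - C) in *. set (w := g (x (S n)) - g (x n)).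
    assert (Hp : - (th * Rabs w) <= u * w).
    { assert (Rabs (u*w) <= th * Rabs w).
      { rewrite Rabs_mult. apply Rmult_le_compat_r. apply Rabs_pos. auto. }
      pose proof (neg_abs (u*w)). lra. }
    replace (f (xi n)) with (C + u) by (unfold u; ring). unfold u, w in *. nra.
Qed.

Lemma rs_sum_opp f g x xi n :
  rs_sum (fun v => - f v) (fun v => - g v) x xi n = rs_sum f g x xi n.
Proof. induction n; simpl; auto. rewrite IHn. ring. Qed.

Lemma var_sum_opp g x n : var_sum (fun v => - g v) x n = var_sum g x n.
Proof. induction n; simpl; auto. rewrite IHn. f_equal.
  replace (- g (x (S n)) - - g (x n)) with (- (g (x (S n)) - g (x n))) by ring.
  apply Rabs_Ropp. Qed.

Lemma var_sum_shift g x y n : (forall k, (k <= n)%nat -> y (S k) = x k) ->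
  var_sum g y (S n) = Rabs (g (x O) - g (y O)) + var_sum g x n.
Proof.
  induction n; intros Hk.
  - simpl. rewrite (Hk O (le_n _)). lra.
  - change (var_sum g y (S (S n))) with (var_sum g y (S n) + Rabs (g (y (S (S n))) - g (y (S n)))).
    rewrite IHn by (intros; apply Hk; lia). simpl.
    rewrite (Hk (S n) (le_n _)), (Hk n (le_S _ _ (le_n _))). lra.
Qed.

Lemma bv_restrict (g : R -> R) T a b V : 0 <= a -> a <= b -> b <= T ->
  (forall n x, is_partition 0 T x n -> var_sum g x n <= V) ->
  forall n x, is_partition a b x n -> var_sum g x n <= V.
Proof.
  intros Ha Hab HbT HV n x [H0 [Hn Hm]].
  set (y := fun k => match k with O => 0 | S k' => if Nat.leb k' n then x k' else T end).
  assert (Hy : forall k, (k <= n)%nat -> y (S k) = x k).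
  { intros k Hk. unfold y; cbv beta iota. replace (Nat.leb k n) with true; auto. symmetry; apply Nat.leb_le; auto. }
  assert (Hleb : Nat.leb (S n) n = false) by (apply Nat.leb_gt; lia).
  assert (Hp : is_partition 0 T y (S (S n))).
  { split; [reflexivity|split].
    - unfold y; cbv beta iota. rewrite Hleb. auto.
    - intros i Hi. destruct i.
      + rewrite Hy by lia. rewrite H0. simpl; lra.
      + destruct (Nat.eq_dec i n).
        * subst i. rewrite Hy by lia. unfold y at 1; cbv beta iota. rewrite Hleb. rewrite Hn; lra.
        * rewrite !Hy by lia. apply Hm. lia. }
  pose proof (HV _ _ Hp).
  change (var_sum g y (S (S n))) with (var_sum g y (S n) + Rabs (g (y (S (S n))) - g (y (S n)))) in H.
  rewrite (var_sum_shift g x y n Hy) in H.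
  pose proof (Rabs_pos (g (x O) - g (y O))). pose proof (Rabs_pos (g (y (S (S n))) - g (y (S n)))).
  lra.
Qed.

Lemma finite_min (Q : nat -> R -> Prop) N :
  (forall i, (i < N)%nat -> exists d, 0 < d /\ Q i d) ->
  (forall i d d', 0 < d' -> d' <= d -> Q i d -> Q i d') ->
  exists d, 0 < d /\ forall i, (i < N)%nat -> Q i d.
Proof.
  intros H Hm. induction N.
  - exists 1. split; [lra|]. intros; lia.
  - destruct IHN as [d1 [Hd1 Hd1']]. intros; apply H; lia.
    destruct (H N (Nat.lt_succ_diag_r N)) as [d2 [Hd2 Hd2']].
    exists (Rmin d1 d2). split. apply Rmin_glb_lt; auto.
    intros i Hi. destruct (Nat.eq_dec i N).
    + subst. apply (Hm N d2); auto. apply Rmin_glb_lt; auto. apply Rmin_r.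
    + apply (Hm i d1); auto. apply Rmin_glb_lt; auto. apply Rmin_l. apply Hd1'. lia.
Qed.

Lemma rs_mono (f g : R -> R) a b eps V : a <= b -> 0 < eps ->
  (forall v, a <= v <= b -> eps <= f v) -> continuous_on_closed f a b ->
  (forall n x, is_partition a b x n -> var_sum g x n <= V) ->
  (forall s t, a <= s -> s <= t -> t <= b -> exists I, RS_integral f g s t I /\ I <= 0) ->
  g b <= g a.
Proof.
  intros Hab Heps Hf Hc HV Hint.
  destruct (Rle_or_lt (g b) (g a)) as [|Hgt]; auto. exfalso.
  set (c := g b - g a).
  destruct (Req_dec a b) as [Heq|Hneq]. { subst. lra. }
  assert (Hab' : a < b) by lra.
  assert (Hc0 : 0 < c) by (unfold c; lra).
  pose proof (Rabs_pos V) as HV0.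
  set (th := eps * c / (4 * (Rabs V + 1))).
  assert (Hth : 0 < th). { unfold th. apply Rdiv_lt_0_compat; nra. }
  destruct (heine_closed f a b Hab Hc th Hth) as [d0 [Hd0 Hd0']].
  destruct (INR_unbounded ((b - a) / d0)) as [N0 HN0].
  set (N := S N0).
  assert (HN : 0 < INR N) by (apply lt_0_INR; unfold N; lia).
  assert (HNg : INR N > (b - a) / d0).
  { unfold N. rewrite S_INR. lra. }
  set (h := (b - a) / INR N).
  assert (Hh : 0 < h) by (unfold h; apply Rdiv_lt_0_compat; lra).
  assert (Hhd : h < d0).
  { unfold h. apply (Rmult_lt_reg_r (INR N)); auto. unfold Rdiv. rewrite Rmult_assoc, Rinv_l by lra.
    apply (Rmult_lt_reg_r (/ d0)). apply Rinv_0_lt_compat; auto.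
    rewrite Rmult_1_r. replace (d0 * INR N * / d0) with (INR N) by (field; lra). lra. }
  assert (HNh : INR N * h = b - a) by (unfold h; field; lra).
  set (eta := eps * c / (4 * INR N)).
  assert (Heta : 0 < eta) by (unfold eta; apply Rdiv_lt_0_compat; nra).
  set (Q := fun m d => forall n x xi, is_partition (a + INR m * h) (a + INR (S m) * h) x n ->
     (forall j, (j < n)%nat -> x j <= xi j <= x (S j) /\ x (S j) - x j < d) ->
     rs_sum f g x xi n < eta).
  destruct (finite_min Q N) as [d [Hd Hd']].
  { intros m Hm.
    assert (HmN : INR (S m) <= INR N) by (apply le_INR; lia).
    pose proof (pos_INR m). rewrite S_INR in HmN.
    destruct (Hint (a + INR m * h) (a + INR (S m) * h)) as [I [HI HI0]].
    - nra. - rewrite S_INR; nra. - rewrite S_INR; nra.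
    - destruct (HI eta Heta) as [dl [Hdl Hdl']]. exists dl. split; auto.
      intros n x xi Hp Hmesh. pose proof (Hdl' n x xi Hp Hmesh). rabs; lra. }
  { intros i dd dd' Hdd' Hle HQ n x xi Hp Hmesh. apply (HQ n x xi Hp).
    intros j Hj. destruct (Hmesh j Hj). split; auto. lra. }
  destruct (INR_unbounded (h / d)) as [K0 HK0].
  set (K := S K0).
  assert (HK : 0 < INR K) by (apply lt_0_INR; unfold K; lia).
  assert (HKg : INR K > h / d) by (unfold K; rewrite S_INR; lra).
  set (h' := h / INR K).
  assert (Hh' : 0 < h') by (unfold h'; apply Rdiv_lt_0_compat; lra).
  assert (Hh'd : h' < d).
  { unfold h'. apply (Rmult_lt_reg_r (INR K)); auto. unfold Rdiv. rewrite Rmult_assoc, Rinv_l by lra.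
    apply (Rmult_lt_reg_r (/ d)). apply Rinv_0_lt_compat; auto.
    rewrite Rmult_1_r. replace (d * INR K * / d) with (INR K) by (field; lra). lra. }
  assert (HKh : INR K * h' = h) by (unfold h'; field; lra).
  set (X := fun k => a + INR k * h').
  assert (HX : forall k, (k <= N * K)%nat -> a <= X k <= b).
  { intros k Hk. unfold X. apply le_INR in Hk. rewrite mult_INR in Hk. pose proof (pos_INR k).
    split. nra. assert (INR k * h' <= INR N * INR K * h') by (apply Rmult_le_compat_r; lra).
    rewrite Rmult_assoc, HKh, HNh in H0. lra. }
  assert (HXm : forall m, X (m * K)%nat = a + INR m * h).
  { intros m. unfold X. rewrite mult_INR, Rmult_assoc, HKh. reflexivity. }
  assert (HXS : forall k, X (S k) = X k + h').
  { intros k. unfold X. rewrite S_INR. ring. }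
  assert (Hclaim : forall m, (m <= N)%nat ->
     eps * (g (a + INR m * h) - g a) <= INR m * eta + th * var_sum g X (m * K)).
  { induction m; intros Hm.
    - simpl. replace (a + 0 * h) with a by ring. lra.
    - specialize (IHm ltac:(lia)).
      set (B := fun j => X (m * K + j)%nat).
      assert (HB0 : B O = a + INR m * h) by (unfold B; rewrite Nat.add_0_r; apply HXm).
      assert (HBK : B K = a + INR (S m) * h).
      { unfold B. replace (m * K + K)%nat with (S m * K)%nat by lia. apply HXm. }
      assert (HBS : forall j, B (S j) = B j + h').
      { intros j. unfold B. rewrite Nat.add_succ_r. apply HXS. }
      assert (HBin : forall j, (j <= K)%nat -> a <= B j <= b).
      { intros j Hj. apply HX. assert (m < N)%nat by lia. nia. }
      assert (HBj : forall j, B j = B O + INR j * h').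
      { induction j. simpl; ring. rewrite HBS, IHj, S_INR. ring. }
      assert (Hp : is_partition (a + INR m * h) (a + INR (S m) * h) B K).
      { split; auto. split; auto. intros i Hi. rewrite HBS. lra. }
      assert (Hrs : rs_sum f g B B K < eta).
      { apply (Hd' m ltac:(lia) K B B Hp). intros j Hj. rewrite HBS. split; lra. }
      assert (Hlow := rs_sum_lower f g B B K (f (B O)) th).
      assert (Hosc : forall j, (j < K)%nat -> Rabs (f (B j) - f (B O)) <= th).
      { intros j Hj. left. apply Hd0'. apply HBin; lia. apply HBin; lia.
        rewrite HBj. replace (B O + INR j * h' - B O) with (INR j * h') by ring.
        assert (INR j < INR K) by (apply lt_INR; auto). pose proof (pos_INR j).
        rewrite Rabs_right by nra. nra. }
      specialize (Hlow Hosc).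
      assert (HS0 := var_sum_ge0 g B K).
      assert (Hf0 : eps <= f (B O)) by (apply Hf; apply HBin; lia).
      assert (Hstep : eps * (g (B K) - g (B O)) <= eta + th * var_sum g B K).
      { destruct (Rle_or_lt 0 (g (B K) - g (B O))).
        - assert (eps * (g (B K) - g (B O)) <= f (B O) * (g (B K) - g (B O))) by nra. nra.
        - pose proof (Rmult_le_pos th _ (Rlt_le _ _ Hth) HS0). nra. }
      rewrite HB0, HBK in Hstep.
      replace (S m * K)%nat with (m * K + K)%nat by lia.
      rewrite var_sum_split. fold B. rewrite S_INR in *. lra. }
  specialize (Hclaim N (le_n _)).
  assert (HNb : a + INR N * h = b) by lra. rewrite HNb in Hclaim.
  assert (HXp : is_partition a b X (N * K)).
  { split. unfold X; simpl; ring. split. rewrite HXm; auto.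
    intros i _. rewrite HXS. lra. }
  pose proof (HV _ _ HXp).
  assert (INR N * eta = eps * c / 4) by (unfold eta; field; lra).
  assert (th * V <= th * Rabs V) by (apply Rmult_le_compat_l; [lra| apply Rle_abs]).
  assert (th * Rabs V < eps * c / 4).
  { unfold th. apply (Rmult_lt_reg_r (4 * (Rabs V + 1))). lra.
    replace (eps * c / (4 * (Rabs V + 1)) * Rabs V * (4 * (Rabs V + 1))) with (eps * c * Rabs V) by (field; lra).
    nra. }
  fold c in Hclaim. nra.
Qed.

Lemma cont_restrict f T a b : 0 <= a -> b <= T -> continuous_on_closed f 0 T -> continuous_on_closed f a b.
Proof.
  intros Ha Hb Hc x Hx e He. destruct (Hc x ltac:(lra) e He) as [d [Hd Hd']].
  exists d. split; auto. intros s Hs Hsx. apply Hd'; auto. lra.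
Qed.

Lemma rs_mono_neg (f g : R -> R) a b eps V : a <= b -> 0 < eps ->
  (forall v, a <= v <= b -> f v <= - eps) -> continuous_on_closed f a b ->
  (forall n x, is_partition a b x n -> var_sum g x n <= V) ->
  (forall s t, a <= s -> s <= t -> t <= b -> exists I, RS_integral f g s t I /\ I <= 0) ->
  g a <= g b.
Proof.
  intros Hab He Hf Hc HV Hint.
  enough (- g b <= - g a) by lra.
  apply (rs_mono (fun v => - f v) (fun v => - g v) a b eps V); auto.
  - intros v Hv. specialize (Hf v Hv). lra.
  - intros x Hx e0 He0. destruct (Hc x Hx e0 He0) as [d [Hd Hd']]. exists d. split; auto.
    intros s Hs Hsx. replace (- f s - - f x) with (- (f s - f x)) by ring. rewrite Rabs_Ropp. auto.
  - intros n x Hp. rewrite var_sum_opp. auto.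
  - intros s t Hs Hst Ht. destruct (Hint s t Hs Hst Ht) as [I [HI HI0]]. exists I. split; auto.
    intros e0 He0. destruct (HI e0 He0) as [d [Hd Hd']]. exists d. split; auto.
    intros n x xi Hp Hm. rewrite rs_sum_opp. auto.
Qed.

Lemma skor_half T t Dl cl (R1 R2 F1 F2 l1 u1 l2 u2 : R -> R) (g1 g2 : R -> R -> R) :
  0 <= t <= T -> 0 <= Dl -> 0 < cl ->
  continuous_on_closed R1 0 T -> continuous_on_closed R2 0 T ->
  bounded_variation_on R1 0 T -> bounded_variation_on R2 0 T ->
  (forall v, 0 <= v <= T -> F1 v = g1 v (R1 T - R1 v)) ->
  (forall v, 0 <= v <= T -> F2 v = g2 v (R2 T - R2 v)) ->
  (forall v y y', 0 <= v <= T -> y <= y' -> g1 v y + cl * (y' - y) <= g1 v y') ->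
  (forall v y y', 0 <= v <= T -> y <= y' -> g2 v y + cl * (y' - y) <= g2 v y') ->
  (forall v, t <= v <= T -> forall y, l2 v <= g2 v y -> l1 v <= g1 v (y + Dl)) ->
  (forall v, t <= v <= T -> forall y, g1 v y <= u1 v -> g2 v (y - Dl) <= u2 v) ->
  (forall v, 0 <= v <= T -> F1 v <= u1 v) ->
  (forall v, 0 <= v <= T -> l2 v <= F2 v) ->
  continuous_on_closed (fun v => F1 v - l1 v) 0 T ->
  continuous_on_closed (fun v => F2 v - u2 v) 0 T ->
  (forall a b, 0 <= a -> a <= b -> b <= T -> exists I,
      RS_integral (fun v => F1 v - l1 v) R1 a b I /\ I <= 0) ->
  (forall a b, 0 <= a -> a <= b -> b <= T -> exists I,
      RS_integral (fun v => F2 v - u2 v) R2 a b I /\ I <= 0) ->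
  (R1 T - R1 t) - (R2 T - R2 t) <= Dl.
Proof.
  intros Ht HDl Hcl HR1 HR2 [V1 HV1] [V2 HV2] HF1 HF2 Hs1 Hs2 HcL HcU Hu1 Hl2 Hc1 Hc2 Hi1 Hi2.
  set (D := fun v => (R1 T - R1 v) - (R2 T - R2 v)).
  fold (D t).
  destruct (Rle_or_lt (D t) Dl) as [|HDt]; auto. exfalso.
  set (eta := (D t - Dl) / 2). assert (Heta : 0 < eta) by (unfold eta; lra).
  set (lev := Dl + eta).
  assert (HDt' : lev < D t) by (unfold lev, eta; lra).
  assert (HDT : D T = 0) by (unfold D; ring).
  assert (Hlev0 : 0 < lev) by (unfold lev; lra).
  assert (HcD : forall v, 0 <= v <= T -> forall e, 0 < e -> exists d, 0 < d /\
     forall w, 0 <= w <= T -> Rabs (w - v) < d -> Rabs (D w - D v) < e).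
  { intros v Hv e He. destruct (HR1 v Hv (e/2) ltac:(lra)) as [d1 [Hd1 Hd1']].
    destruct (HR2 v Hv (e/2) ltac:(lra)) as [d2 [Hd2 Hd2']].
    exists (Rmin d1 d2). split. apply Rmin_glb_lt; auto.
    intros w Hw Hwv. pose proof (Rmin_l d1 d2). pose proof (Rmin_r d1 d2).
    specialize (Hd1' w Hw ltac:(lra)). specialize (Hd2' w Hw ltac:(lra)).
    unfold D. rabs; lra. }
  set (Es := fun s => t <= s <= T /\ forall r, t <= r <= s -> lev <= D r).
  assert (Hbd : bound Es). { exists T. intros s [Hs _]. lra. }
  assert (Hne : exists s, Es s). { exists t. split. lra. intros r Hr. replace r with t by lra. lra. }
  destruct (completeness Es Hbd Hne) as [b [Hub Hlub]].
  assert (Htb : t <= b) by (apply Hub; destruct Hne as [s Hs]; unfold Es; split; [lra|]; intros r Hr; replace r with t by lra; lra).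
  assert (HbT : b <= T). { apply Hlub. intros s [Hs _]. lra. }
  assert (F1' : forall r, t <= r < b -> lev <= D r).
  { intros r Hr. apply NNPP. intros Hn.
    assert (b <= r). { apply Hlub. intros s [Hs Hs']. destruct (Rle_or_lt s r); auto.
      exfalso. apply Hn. apply Hs'. lra. } lra. }
  assert (F2' : lev <= D b).
  { destruct (Req_dec b t) as [Heq|Hneq]. { rewrite Heq; lra. }
    destruct (Rle_or_lt lev (D b)) as [|Hlt]; auto. exfalso.
    destruct (HcD b ltac:(lra) (lev - D b) ltac:(lra)) as [d [Hd Hd']].
    set (r := Rmax t (b - d/2)).
    assert (t <= r) by apply Rmax_l. assert (b - d/2 <= r) by apply Rmax_r.
    assert (r < b) by (unfold r; apply Rmax_lub_lt; lra).
    pose proof (F1' r ltac:(lra)). specialize (Hd' r ltac:(lra)). rabs; lra. }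
  assert (F3' : D b <= lev).
  { destruct (Rle_or_lt (D b) lev) as [|Hlt]; auto. exfalso.
    assert (b < T). { destruct (Req_dec b T). subst b. lra. lra. }
    destruct (HcD b ltac:(lra) (D b - lev) ltac:(lra)) as [d [Hd Hd']].
    set (s := Rmin T (b + d/2)).
    assert (s <= T) by apply Rmin_l. assert (s <= b + d/2) by apply Rmin_r.
    assert (b < s) by (unfold s; apply Rmin_glb_lt; lra).
    assert (Es s). { split. lra. intros r Hr. destruct (Rlt_or_le r b). apply F1'; lra.
      specialize (Hd' r ltac:(lra)). assert (Rabs (r - b) < d) by (rabs; lra). specialize (Hd' H4). rabs; lra. }
    pose proof (Hub s H3). lra. }
  assert (Htb' : t < b). { destruct (Req_dec t b) as [Heq|]; [|lra]. rewrite <- Heq in F3'. lra. }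
  assert (HDin : forall v, t <= v <= b -> lev <= D v).
  { intros v Hv. destruct (Req_dec v b). subst; auto. apply F1'; lra. }
  assert (Hf1 : forall v, t <= v <= b -> cl * eta <= F1 v - l1 v).
  { intros v Hv. pose proof (HDin v Hv). unfold D, lev in H.
    rewrite (HF1 v ltac:(lra)).
    assert (l2 v <= g2 v (R2 T - R2 v)) by (rewrite <- HF2 by lra; apply Hl2; lra).
    pose proof (HcL v ltac:(lra) _ H0).
    pose proof (Hs1 v (R2 T - R2 v + Dl) (R1 T - R1 v) ltac:(lra) ltac:(lra)).
    assert (cl * eta <= cl * (R1 T - R1 v - (R2 T - R2 v + Dl))) by (apply Rmult_le_compat_l; lra).
    lra. }
  assert (Hf2 : forall v, t <= v <= b -> F2 v - u2 v <= - (cl * eta)).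
  { intros v Hv. pose proof (HDin v Hv). unfold D, lev in H.
    rewrite (HF2 v ltac:(lra)).
    assert (g1 v (R1 T - R1 v) <= u1 v) by (rewrite <- HF1 by lra; apply Hu1; lra).
    pose proof (HcU v ltac:(lra) _ H0).
    pose proof (Hs2 v (R2 T - R2 v) (R1 T - R1 v - Dl) ltac:(lra) ltac:(lra)).
    assert (cl * eta <= cl * (R1 T - R1 v - Dl - (R2 T - R2 v))) by (apply Rmult_le_compat_l; lra).
    lra. }
  assert (Hm1 : R1 b <= R1 t).
  { apply (rs_mono (fun v => F1 v - l1 v) R1 t b (cl * eta) V1); auto; try lra.
    apply Rmult_lt_0_compat; auto.
    apply cont_restrict with T; auto; lra.
    apply (bv_restrict R1 T); auto; lra.
    intros s r Hs Hsr Hr. apply Hi1; lra. }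
  assert (Hm2 : R2 t <= R2 b).
  { apply (rs_mono_neg (fun v => F2 v - u2 v) R2 t b (cl * eta) V2); auto; try lra.
    apply Rmult_lt_0_compat; auto.
    apply cont_restrict with T; auto; lra.
    apply (bv_restrict R2 T); auto; lra.
    intros s r Hs Hsr Hr. apply Hi2; lra. }
  assert (D t <= D b) by (unfold D; lra). lra.
Qed.


Lemma H_sub {Om} (H : (Om -> R) -> Prop) E : sublinear_expectation H E ->
  forall X Y, H X -> H Y -> H (fun o => X o - Y o).
Proof.
  intros [Hc [Hadd [Hsc _]]] X Y HX HY.
  replace (fun o => X o - Y o) with (fun o => X o + (fun o => -1 * Y o) o).
  apply Hadd; auto. apply functional_extensionality. intros o. simpl. ring.
Qed.

Lemma H_addc {Om} (H : (Om -> R) -> Prop) E : sublinear_expectation H E ->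
  forall X c, H X -> H (fun o => X o + c).
Proof. intros [Hc [Hadd _]] X c HX. apply (Hadd X (fun _ => c)); auto. Qed.

Lemma H_abs {Om} (H : (Om -> R) -> Prop) E : sublinear_expectation H E ->
  forall X, H X -> H (fun o => Rabs (X o)).
Proof. intros [_ [_ [_ [Ha _]]]]. auto. Qed.

Lemma E_trans {Om} (H : (Om -> R) -> Prop) E : sublinear_expectation H E ->
  forall X c, H X -> E (fun o => X o + c) = E X + c.
Proof.
  intros HE. pose proof HE as [Hc [Hadd [Hsc [Habs [Hmono [Hconst [Hsub Hhom]]]]]]].
  intros X c HX.
  pose proof (Hsub X (fun _ => c) HX (Hc c)) as H1. simpl in H1. rewrite Hconst in H1.
  assert (HXc : H (fun o => X o + c)) by (apply H_addc with E; auto).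
  pose proof (Hsub (fun o => X o + c) (fun _ => -c) HXc (Hc (-c))) as H2. simpl in H2.
  rewrite Hconst in H2.
  assert (Heq : (fun o => X o + c + - c) = X) by (apply functional_extensionality; intros o; ring).
  rewrite Heq in H2. lra.
Qed.

Lemma E_mono_c {Om} (H : (Om -> R) -> Prop) E : sublinear_expectation H E ->
  forall A B c, H A -> H B -> (forall o, A o <= B o + c) -> E A <= E B + c.
Proof.
  intros HE A B c HA HB Hab. pose proof HE as [Hc [Hadd [Hsc [Habs [Hmono _]]]]].
  rewrite <- (E_trans H E HE B c HB). apply Hmono; auto; apply H_addc with E; auto.
Qed.

Lemma E_ge0 {Om} (H : (Om -> R) -> Prop) E : sublinear_expectation H E ->
  forall X, H X -> (forall o, 0 <= X o) -> 0 <= E X.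
Proof.
  intros HE X HX Hp. pose proof HE as [Hc [Hadd [Hsc [Habs [Hmono [Hconst _]]]]]].
  rewrite <- (Hconst 0). apply Hmono; auto.
Qed.

Lemma E_diff {Om} (H : (Om -> R) -> Prop) E : sublinear_expectation H E ->
  forall X Y, H X -> H Y -> Rabs (E X - E Y) <= E (fun o => Rabs (X o - Y o)).
Proof.
  intros HE. pose proof HE as [Hc [Hadd [Hsc [Habs [Hmono [Hconst [Hsub Hhom]]]]]]].
  assert (K : forall X Y, H X -> H Y -> E X <= E Y + E (fun o => Rabs (X o - Y o))).
  { intros X Y HX HY.
    assert (HD : H (fun o => Rabs (X o - Y o))) by (apply Habs; apply H_sub with E; auto).
    eapply Rle_trans. apply (Hmono X (fun o => Y o + Rabs (X o - Y o))); auto.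
    intros o. pose proof (Rle_abs (X o - Y o)). lra.
    apply (Hsub Y (fun o => Rabs (X o - Y o))); auto. }
  intros X Y HX HY. pose proof (K X Y HX HY). pose proof (K Y X HY HX).
  replace (fun o => Rabs (Y o - X o)) with (fun o => Rabs (X o - Y o)) in H1.
  rabs; lra. apply functional_extensionality. intros o. rewrite <- Rabs_Ropp. f_equal. ring.
Qed.

Definition Gf {Om} (E : (Om -> R) -> R) (hb : R -> Om -> R -> R) v (Z : Om -> R) y :=
  E (fun o => hb v o (Z o + y)).

Lemma hb_slope {Om} T (H : (Om -> R) -> Prop) l u hb C cl cu :
  standing_assumptions T H l u hb C cl cu ->
  forall v o y y', 0 <= v <= T -> y <= y' ->
  hb v o y + cl * (y' - y) <= hb v o y' /\ hb v o y' <= hb v o y + cu * (y' - y).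
Proof.
  intros [_ [_ [_ [_ [_ [Hinc [_ [_ Hlip]]]]]]]] v o y y' Hv Hyy.
  destruct (Hlip v o y' y Hv) as [H1 H2].
  rewrite (Rabs_right (y' - y)) in H1, H2 by lra.
  destruct (Req_dec y y'). { subst. split; lra. }
  pose proof (Hinc v o y y' Hv ltac:(lra)).
  rewrite Rabs_right in H1, H2 by lra. lra.
Qed.

Lemma G_in {Om} T (H : (Om -> R) -> Prop) E (hb : R -> Om -> R -> R) :
  sublinear_expectation H E ->
  (forall t X, 0 <= t <= T -> H X -> H (fun o => hb t o (X o))) ->
  forall v Z y, 0 <= v <= T -> H Z -> H (fun o => hb v o (Z o + y)).
Proof.
  intros HE Hcomp v Z y Hv HZ. apply (Hcomp v (fun o => Z o + y)); auto. apply H_addc with E; auto.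
Qed.

Lemma G_slope {Om} T (H : (Om -> R) -> Prop) E l u hb C cl cu :
  sublinear_expectation H E -> standing_assumptions T H l u hb C cl cu ->
  (forall t X, 0 <= t <= T -> H X -> H (fun o => hb t o (X o))) ->
  forall v Z y y', 0 <= v <= T -> H Z -> y <= y' ->
  Gf E hb v Z y + cl * (y' - y) <= Gf E hb v Z y' /\
  Gf E hb v Z y' <= Gf E hb v Z y + cu * (y' - y).
Proof.
  intros HE Hsa Hcomp v Z y y' Hv HZ Hyy. unfold Gf.
  pose proof (G_in T H E hb HE Hcomp v Z y Hv HZ).
  pose proof (G_in T H E hb HE Hcomp v Z y' Hv HZ).
  split.
  - enough (E (fun o => hb v o (Z o + y)) <= E (fun o => hb v o (Z o + y')) + - (cl * (y' - y))) by lra.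
    apply E_mono_c with H; auto. intros o.
    destruct (hb_slope T H l u hb C cl cu Hsa v o (Z o + y) (Z o + y') Hv ltac:(lra)). 
    replace (Z o + y' - (Z o + y)) with (y' - y) in * by ring. lra.
  - apply E_mono_c with H; auto. intros o.
    destruct (hb_slope T H l u hb C cl cu Hsa v o (Z o + y) (Z o + y') Hv ltac:(lra)).
    replace (Z o + y' - (Z o + y)) with (y' - y) in * by ring. lra.
Qed.

Lemma G_Z {Om} T (H : (Om -> R) -> Prop) E l u hb C cl cu :
  sublinear_expectation H E -> standing_assumptions T H l u hb C cl cu ->
  (forall t X, 0 <= t <= T -> H X -> H (fun o => hb t o (X o))) ->
  0 <= cu ->
  forall v Z Z' y, 0 <= v <= T -> H Z -> H Z' ->
  Rabs (Gf E hb v Z y - Gf E hb v Z' y) <= cu * E (fun o => Rabs (Z o - Z' o)).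
Proof.
  intros HE Hsa Hcomp Hcu v Z Z' y Hv HZ HZ'. unfold Gf.
  pose proof HE as [Hc [Hadd [Hsc [Habs [Hmono [Hconst [Hsub Hhom]]]]]]].
  pose proof (G_in T H E hb HE Hcomp v Z y Hv HZ).
  pose proof (G_in T H E hb HE Hcomp v Z' y Hv HZ').
  eapply Rle_trans. apply (E_diff H E HE); auto.
  assert (HD : H (fun o => Rabs (Z o - Z' o))) by (apply Habs; apply H_sub with E; auto).
  rewrite <- Hhom by auto.
  apply Hmono; auto. apply Habs. apply H_sub with E; auto.
  intros o. destruct Hsa as [_ [_ [_ [_ [_ [_ [_ [_ Hlip]]]]]]]].
  destruct (Hlip v o (Z o + y) (Z' o + y) Hv) as [_ H2].
  replace (Z o + y - (Z' o + y)) with (Z o - Z' o) in H2 by ring. auto.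
Qed.

Lemma cross_real (G1a G1b G2 : R -> R) cl cu A B M1 M2 M3 M4 x0 x1 l1 l2 u1 u2 :
  0 < cl -> 0 <= cu -> 0 <= M1 -> 0 <= M2 -> 0 <= M3 -> 0 <= M4 ->
  (forall x x', x <= x' -> G1a x + cl * (x' - x) <= G1a x') ->
  (forall x x', x <= x' -> G1b x + cl * (x' - x) <= G1b x') ->
  (forall x x', x <= x' -> G2 x + cl * (x' - x) <= G2 x') ->
  (forall x, Rabs (G1a x - G1b x) <= 2 * cu * M2) ->
  G1b x0 = l1 -> Rabs (G1b x0 - G2 x0) <= M3 ->
  G1b x1 = u1 -> Rabs (G1b x1 - G2 x1) <= M3 ->
  Rabs (l1 - l2) <= M4 -> Rabs (u1 - u2) <= M4 -> Rabs (A - B) <= M1 ->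
  let Dl := M1 + 2 * cu / cl * M2 + / cl * (M3 + M4) in
  (forall y, l2 <= G2 (y + B) -> l1 <= G1a (y + Dl + A)) /\
  (forall y, G1a (y + A) <= u1 -> G2 (y - Dl + B) <= u2) /\
  (forall y, l1 <= G1a (y + A) -> l2 <= G2 (y + Dl + B)) /\
  (forall y, G2 (y + B) <= u2 -> G1a (y - Dl + A) <= u1).
Proof.
  intros Hcl Hcu HM1 HM2 HM3 HM4 S1a S1b S2 HZ Hx0 H3a Hx1 H3b H4a H4b H1 Dl.
  set (P := 2 * cu / cl * M2). set (Q := / cl * (M3 + M4)).
  assert (HP : cl * P = 2 * cu * M2) by (unfold P; field; lra).
  assert (HQ : cl * Q = M3 + M4) by (unfold Q; field; lra).
  assert (HDl : Dl = M1 + P + Q) by reflexivity.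
  assert (HP0 : 0 <= P) by (unfold P; apply Rmult_le_pos; [apply Rmult_le_pos; [lra| apply Rlt_le, Rinv_0_lt_compat; lra]| lra]).
  assert (HQ0 : 0 <= Q) by (unfold Q; apply Rmult_le_pos; [apply Rlt_le, Rinv_0_lt_compat; lra| lra]).
  assert (Mul : forall a b, a <= b -> cl * a <= cl * b) by (intros; apply Rmult_le_compat_l; lra).
  rewrite HDl. clear HDl Dl.
  repeat split.
  - intros y Hy.
    assert (Hz : x0 - Q <= y + B).
    { destruct (Rle_or_lt (x0 - Q) (y + B)) as [|Hlt]; auto. exfalso.
      pose proof (S2 (y + B) x0 ltac:(lra)).
      assert (cl * Q < cl * (x0 - (y + B))) by (apply Rmult_lt_compat_l; lra).
      rabs; lra. }
    pose proof (S1b x0 (y + (M1 + P + Q) + A) ltac:(rabs; lra)).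
    pose proof (Mul P (y + (M1 + P + Q) + A - x0) ltac:(rabs; lra)).
    pose proof (HZ (y + (M1 + P + Q) + A)). rabs; lra.
  - intros y Hy.
    pose proof (HZ (y + A)).
    assert (Hz : y + A <= x1 + P).
    { destruct (Rle_or_lt (y + A) (x1 + P)) as [|Hlt]; auto. exfalso.
      pose proof (S1b x1 (y + A) ltac:(lra)).
      assert (cl * P < cl * (y + A - x1)) by (apply Rmult_lt_compat_l; lra).
      rabs; lra. }
    pose proof (S2 (y - (M1 + P + Q) + B) x1 ltac:(rabs; lra)).
    pose proof (Mul Q (x1 - (y - (M1 + P + Q) + B)) ltac:(rabs; lra)).
    rabs; lra.
  - intros y Hy.
    pose proof (HZ (y + A)).
    assert (Hz : x0 - P <= y + A).
    { destruct (Rle_or_lt (x0 - P) (y + A)) as [|Hlt]; auto. exfalso.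
      pose proof (S1b (y + A) x0 ltac:(lra)).
      assert (cl * P < cl * (x0 - (y + A))) by (apply Rmult_lt_compat_l; lra).
      rabs; lra. }
    pose proof (S2 x0 (y + (M1 + P + Q) + B) ltac:(rabs; lra)).
    pose proof (Mul Q (y + (M1 + P + Q) + B - x0) ltac:(rabs; lra)).
    rabs; lra.
  - intros y Hy.
    assert (Hz : y + B <= x1 + Q).
    { destruct (Rle_or_lt (y + B) (x1 + Q)) as [|Hlt]; auto. exfalso.
      pose proof (S2 x1 (y + B) ltac:(lra)).
      assert (cl * Q < cl * (y + B - x1)) by (apply Rmult_lt_compat_l; lra).
      rabs; lra. }
    pose proof (S1b (y - (M1 + P + Q) + A) x1 ltac:(rabs; lra)).
    pose proof (Mul P (x1 - (y - (M1 + P + Q) + A)) ltac:(rabs; lra)).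
    pose proof (HZ (y - (M1 + P + Q) + A)). rabs; lra.
Qed.

Lemma G_eq {Om} T (H : (Om -> R) -> Prop) E l u hb C cl cu :
  sublinear_expectation H E -> standing_assumptions T H l u hb C cl cu ->
  (forall t X, 0 <= t <= T -> H X -> H (fun o => hb t o (X o))) -> 0 <= cu ->
  forall v Y Z k, 0 <= v <= T -> H Y -> H Z ->
  E (fun o => Rabs (Y o - (Z o + k))) = 0 ->
  E (fun o => hb v o (Y o)) = Gf E hb v Z k.
Proof.
  intros HE Hsa Hcomp Hcu v Y Z k Hv HY HZ H0. unfold Gf.
  pose proof HE as [Hc [Hadd [Hsc [Habs [Hmono [Hconst [Hsub Hhom]]]]]]].
  assert (HZk : H (fun o => Z o + k)) by (apply H_addc with E; auto).
  assert (HD : H (fun o => Rabs (Y o - (Z o + k)))).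
  { apply Habs. apply (H_sub H E HE Y (fun o => Z o + k)); auto. }
  assert (Rabs (E (fun o => hb v o (Y o)) - E (fun o => hb v o (Z o + k))) <= 0).
  { eapply Rle_trans. apply (E_diff H E HE).
    apply (Hcomp v Y); auto. apply (G_in T H E hb HE Hcomp v Z k); auto.
    eapply Rle_trans. apply (Hmono _ (fun o => cu * Rabs (Y o - (Z o + k)))).
    apply Habs. apply (H_sub H E HE (fun o => hb v o (Y o)) (fun o => hb v o (Z o + k))).
    apply (Hcomp v Y); auto. apply (G_in T H E hb HE Hcomp v Z k); auto.
    apply Hsc; auto.
    intros o. destruct Hsa as [_ [_ [_ [_ [_ [_ [_ [_ Hlip]]]]]]]].
    apply (Hlip v o (Y o) (Z o + k) Hv).
    rewrite Hhom by auto. rewrite H0. lra. }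
  pose proof (Rabs_pos (E (fun o => hb v o (Y o)) - E (fun o => hb v o (Z o + k)))).
  rabs; lra.
Qed.

Lemma surj (G : R -> R) cl cu : 0 < cl -> 0 <= cu ->
  (forall x x', x <= x' -> G x + cl * (x' - x) <= G x' /\ G x' <= G x + cu * (x' - x)) ->
  forall c, exists x, G x = c.
Proof.
  intros Hcl Hcu HG c.
  assert (Hct : continuity (fun x => G x - c)).
  { intros x. apply cont_pt_of. intros e He. exists (e / (cu + 1)). split.
    apply Rdiv_lt_0_compat; lra. intros y Hy.
    replace (G y - c - (G x - c)) with (G y - G x) by ring.
    assert (cu * Rabs (y - x) < e).
    { apply Rle_lt_trans with ((cu + 1) * Rabs (y - x)).
      pose proof (Rabs_pos (y - x)). nra.
      apply (Rmult_lt_reg_r (/ (cu + 1))). apply Rinv_0_lt_compat; lra.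
      replace ((cu + 1) * Rabs (y - x) * / (cu + 1)) with (Rabs (y - x)) by (field; lra).
      exact Hy. }
    destruct (Rle_or_lt x y).
    - destruct (HG x y H0). rewrite (Rabs_right (y - x)) in H by lra.
      assert (0 <= cl * (y - x)) by (apply Rmult_le_pos; lra). rabs; lra.
    - destruct (HG y x ltac:(lra)). rewrite (Rabs_left (y - x)) in H by lra.
      assert (0 <= cl * (x - y)) by (apply Rmult_le_pos; lra). rabs; lra. }
  set (hi := Rabs (c - G 0) / cl + 1).
  assert (Hhi : 0 < hi) by (unfold hi; pose proof (Rabs_pos (c - G 0)); assert (0 <= Rabs (c - G 0) / cl) by (unfold Rdiv; apply Rmult_le_pos; [lra| apply Rlt_le, Rinv_0_lt_compat; lra]); lra).
  assert (Hclhi : cl * hi = Rabs (c - G 0) + cl) by (unfold hi; field; lra).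
  destruct (HG 0 hi ltac:(lra)) as [A1 _].
  destruct (HG (- hi) 0 ltac:(lra)) as [A2 _].
  destruct (IVT (fun x => G x - c) (- hi) hi Hct ltac:(lra)) as [z [_ Hz]].
  - replace (0 - - hi) with hi in A2 by ring. rabs; lra.
  - replace (hi - 0) with hi in A1 by ring. rabs; lra.
  - exists z. lra.
Qed.

Lemma inv_at_spec (G : R -> R) c : (exists x, G x = c) -> G (inv_at G c) = c.
Proof. intros Hx. unfold inv_at. apply (epsilon_spec (inhabits 0) (fun x => G x = c)). auto. Qed.

Lemma F_cont {Om} T (H : (Om -> R) -> Prop) E F l u hb C cl cu (l' : R -> R) Y :
  sublinear_expectation H E -> standing_assumptions T H l u hb C cl cu ->
  (forall t X, 0 <= t <= T -> H X -> H (fun o => hb t o (X o))) -> 0 <= cu ->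
  filtration_in T H F -> C1G T E F Y -> continuous_on_closed l' 0 T ->
  continuous_on_closed (fun v => E (fun o => hb v o (Y v o)) - l' v) 0 T.
Proof.
  intros HE Hsa Hcomp Hcu [_ HFH] [HYF HYc] Hl v Hv e He.
  pose proof HE as [Hc [Hadd [Hsc [Habs [Hmono [Hconst [Hsub Hhom]]]]]]].
  pose proof Hsa as [_ [_ [_ [_ [Huc [_ [_ [_ Hlip]]]]]]]].
  destruct (Hl v Hv (e/3) ltac:(lra)) as [d1 [Hd1 Hd1']].
  destruct (Huc (e/3) ltac:(lra)) as [dh [Hdh Hdh']].
  destruct (HYc v Hv (e / (3 * (cu + 1))) ltac:(apply Rdiv_lt_0_compat; lra)) as [d2 [Hd2 Hd2']].
  exists (Rmin d1 (Rmin dh d2)). split. apply Rmin_glb_lt; auto. apply Rmin_glb_lt; auto.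
  intros w Hw Hwv.
  pose proof (Rmin_l d1 (Rmin dh d2)). pose proof (Rmin_r d1 (Rmin dh d2)).
  pose proof (Rmin_l dh d2). pose proof (Rmin_r dh d2).
  assert (HYw : H (Y w)) by (apply (HFH w); auto).
  assert (HYv : H (Y v)) by (apply (HFH v); auto).
  assert (Hw1 : H (fun o => hb w o (Y w o))) by (apply (Hcomp w (Y w)); auto).
  assert (Hv1 : H (fun o => hb v o (Y v o))) by (apply (Hcomp v (Y v)); auto).
  assert (HD : H (fun o => Rabs (Y w o - Y v o))) by (apply Habs; apply (H_sub H E HE); auto).
  specialize (Hd1' w Hw ltac:(lra)). specialize (Hd2' w Hw ltac:(lra)).
  assert (Hm : E (fun o => Rabs (hb w o (Y w o) - hb v o (Y v o))) <=
               E (fun o => cu * Rabs (Y w o - Y v o)) + e / 3).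
  { apply (E_mono_c H E HE).
    apply Habs. apply (H_sub H E HE); auto. apply Hsc; auto.
    intros o. specialize (Hdh' o w v (Y w o) (Y w o) Hw Hv ltac:(lra) ltac:(rewrite Rminus_diag, Rabs_R0; lra)).
    destruct (Hlip v o (Y w o) (Y v o) Hv) as [_ Hl2].
    pose proof (Rabs_triang (hb w o (Y w o) - hb v o (Y w o)) (hb v o (Y w o) - hb v o (Y v o))).
    replace (hb w o (Y w o) - hb v o (Y w o) + (hb v o (Y w o) - hb v o (Y v o)))
      with (hb w o (Y w o) - hb v o (Y v o)) in H4 by ring. lra. }
  rewrite Hhom in Hm by auto.
  pose proof (E_diff H E HE _ _ Hw1 Hv1).
  assert (cu * E (fun o => Rabs (Y w o - Y v o)) <= e / 3).
  { apply Rle_trans with (cu * (e / (3 * (cu + 1)))).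
    apply Rmult_le_compat_l; lra.
    apply (Rmult_le_reg_r (3 * (cu + 1))). lra.
    replace (cu * (e / (3 * (cu + 1))) * (3 * (cu + 1))) with (cu * e) by (field; lra). nra. }
  replace (E (fun o => hb w o (Y w o)) - l' w - (E (fun o => hb v o (Y v o)) - l' v))
    with ((E (fun o => hb w o (Y w o)) - E (fun o => hb v o (Y v o))) - (l' w - l' v)) by ring.
  rabs; lra.
Qed.

Theorem proposition3p10
  (Om : Type) (H : (Om -> R) -> Prop) (E : (Om -> R) -> R)
  (F : R -> (Om -> R) -> Prop) (T : R)
  (HT : 0 < T) (HE : sublinear_expectation H E) (HF : filtration_in T H F)
  (C cl cu : R) (Hcl : 0 < cl) (Hcu : 0 < cu)
  (l1 u1 l2 u2 : R -> R) (hb1 hb2 : R -> Om -> R -> R)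
  (Hsa1 : standing_assumptions T H l1 u1 hb1 C cl cu)
  (Hsa2 : standing_assumptions T H l2 u2 hb2 C cl cu)
  (Hcomp1 : forall t X, 0 <= t <= T -> H X -> H (fun o => hb1 t o (X o)))
  (Hcomp2 : forall t X, 0 <= t <= T -> H X -> H (fun o => hb2 t o (X o)))
  (Yb1 Yb2 Y1 Y2 : R -> Om -> R) (R1 R2 : R -> R)
  (HYb1 : C1G T E F Yb1) (HYb2 : C1G T E F Yb2)
  (HT1 : l1 T <= E (fun o => hb1 T o (Yb1 T o)) <= u1 T)
  (HT2 : l2 T <= E (fun o => hb2 T o (Yb2 T o)) <= u2 T)
  (Hsol1 : BSP T E F Yb1 hb1 l1 u1 Y1 R1)
  (Hsol2 : BSP T E F Yb2 hb2 l2 u2 Y2 R2) :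
  forall t, 0 <= t <= T ->
  forall M1 M2 M3 M4 : R,
    (forall s, t <= s <= T -> Rabs (E (Yb1 s) - E (Yb2 s)) <= M1) ->
    (forall s, t <= s <= T -> E (fun o => Rabs (Yb1 s o - Yb2 s o)) <= M2) ->
    (forall s, t <= s <= T ->
       Rmax
         (Rabs (Hbar E hb1 s (Lof E hb1 l1 s (Yb2 s)) (Yb2 s)
                - Hbar E hb2 s (Lof E hb1 l1 s (Yb2 s)) (Yb2 s)))
         (Rabs (Hbar E hb1 s (Uof E hb1 u1 s (Yb2 s)) (Yb2 s)
                - Hbar E hb2 s (Uof E hb1 u1 s (Yb2 s)) (Yb2 s))) <= M3) ->
    (forall s, t <= s <= T -> Rmax (Rabs (l1 s - l2 s)) (Rabs (u1 s - u2 s)) <= M4) ->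
    Rabs ((R1 T - R1 t) - (R2 T - R2 t))
      <= M1 + 2 * cu / cl * M2 + / cl * (M3 + M4).
Proof.
  intros t Ht M1 M2 M3 M4 HM1 HM2 HM3 HM4.
  pose proof HE as [Hc [Hadd [Hsc [Habs [Hmono [Hconst [Hsub Hhom]]]]]]].
  pose proof HF as [_ HFH].
  pose proof Hsa1 as [_ [Hl1c [Hu1c _]]].
  pose proof Hsa2 as [_ [Hl2c [Hu2c _]]].
  destruct Hsol1 as [HY1 [[HR1c [HR1bv _]] [Heq1 [Hbd1 [Hil1 Hiu1]]]]].
  destruct Hsol2 as [HY2 [[HR2c [HR2bv _]] [Heq2 [Hbd2 [Hil2 Hiu2]]]]].
  assert (HcuR : 0 <= cu) by lra.
  assert (HinYb1 : forall v, 0 <= v <= T -> H (Yb1 v)) by (intros v Hv; apply (HFH v); auto; apply HYb1; auto).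
  assert (HinYb2 : forall v, 0 <= v <= T -> H (Yb2 v)) by (intros v Hv; apply (HFH v); auto; apply HYb2; auto).
  assert (HinY1 : forall v, 0 <= v <= T -> H (Y1 v)) by (intros v Hv; apply (HFH v); auto; apply HY1; auto).
  assert (HinY2 : forall v, 0 <= v <= T -> H (Y2 v)) by (intros v Hv; apply (HFH v); auto; apply HY2; auto).
  assert (Htt : t <= t <= T) by lra.
  assert (HM1p : 0 <= M1) by (pose proof (HM1 t Htt); pose proof (Rabs_pos (E (Yb1 t) - E (Yb2 t))); lra).
  assert (HM2p : 0 <= M2).
  { pose proof (HM2 t Htt). assert (0 <= E (fun o => Rabs (Yb1 t o - Yb2 t o))); [|lra].
    apply (E_ge0 H E HE). apply Habs. apply (H_sub H E HE); apply HinYb1 || apply HinYb2; lra.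
    intros; apply Rabs_pos. }
  assert (HM3p : 0 <= M3).
  { pose proof (HM3 t Htt). eapply Rle_trans; [|exact H0]. eapply Rle_trans; [|apply Rmax_l]. apply Rabs_pos. }
  assert (HM4p : 0 <= M4).
  { pose proof (HM4 t Htt). eapply Rle_trans; [|exact H0]. eapply Rle_trans; [|apply Rmax_l]. apply Rabs_pos. }
  set (Dl := M1 + 2 * cu / cl * M2 + / cl * (M3 + M4)).
  assert (HDl : 0 <= Dl).
  { unfold Dl. assert (0 <= 2 * cu / cl * M2).
    { apply Rmult_le_pos; [|lra]. unfold Rdiv. apply Rmult_le_pos; [lra|]. apply Rlt_le, Rinv_0_lt_compat; lra. }
    assert (0 <= / cl * (M3 + M4)) by (apply Rmult_le_pos; [apply Rlt_le, Rinv_0_lt_compat; lra| lra]). lra. }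
  set (g1 := fun v y => Gf E hb1 v (Yb1 v) y).
  set (g2 := fun v y => Gf E hb2 v (Yb2 v) y).
  set (F1 := fun v => E (fun o => hb1 v o (Y1 v o))).
  set (F2 := fun v => E (fun o => hb2 v o (Y2 v o))).
  assert (Hcross : forall v, t <= v <= T ->
    (forall y, l2 v <= g2 v y -> l1 v <= g1 v (y + Dl)) /\
    (forall y, g1 v y <= u1 v -> g2 v (y - Dl) <= u2 v) /\
    (forall y, l1 v <= g1 v y -> l2 v <= g2 v (y + Dl)) /\
    (forall y, g2 v y <= u2 v -> g1 v (y - Dl) <= u1 v)).
  { intros v Hv. assert (Hv0 : 0 <= v <= T) by lra.
    set (A := E (Yb1 v)). set (B := E (Yb2 v)).
    set (Zc1 := fun o => Yb1 v o - A). set (Zc2 := fun o => Yb2 v o - B).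
    assert (HZc1 : H Zc1) by (apply (H_addc H E HE); auto).
    assert (HZc2 : H Zc2) by (apply (H_addc H E HE); auto).
    set (G1a := Gf E hb1 v Zc1). set (G1b := Gf E hb1 v Zc2). set (G2 := Gf E hb2 v Zc2).
    assert (Hg1 : forall y, g1 v y = G1a (y + A)).
    { intros y. unfold g1, G1a, Gf, Zc1. f_equal. apply functional_extensionality. intros o. f_equal. ring. }
    assert (Hg2 : forall y, g2 v y = G2 (y + B)).
    { intros y. unfold g2, G2, Gf, Zc2. f_equal. apply functional_extensionality. intros o. f_equal. ring. }
    assert (Hbar1 : (fun x => Hbar E hb1 v x (Yb2 v)) = G1b).
    { apply functional_extensionality. intros x. unfold Hbar, G1b, Gf, Zc2, B. f_equal.
      apply functional_extensionality. intros o. f_equal. ring. }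
    assert (Hbar2 : forall x, Hbar E hb2 v x (Yb2 v) = G2 x).
    { intros x. unfold Hbar, G2, Gf, Zc2, B. f_equal.
      apply functional_extensionality. intros o. f_equal. ring. }
    assert (S1a : forall x x', x <= x' -> G1a x + cl * (x' - x) <= G1a x').
    { intros x x' Hx. apply (G_slope T H E l1 u1 hb1 C cl cu HE Hsa1 Hcomp1 v Zc1 x x' Hv0 HZc1 Hx). }
    assert (S1b' : forall x x', x <= x' -> G1b x + cl * (x' - x) <= G1b x' /\ G1b x' <= G1b x + cu * (x' - x)).
    { intros x x' Hx. apply (G_slope T H E l1 u1 hb1 C cl cu HE Hsa1 Hcomp1 v Zc2 x x' Hv0 HZc2 Hx). }
    assert (S2 : forall x x', x <= x' -> G2 x + cl * (x' - x) <= G2 x').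
    { intros x x' Hx. apply (G_slope T H E l2 u2 hb2 C cl cu HE Hsa2 Hcomp2 v Zc2 x x' Hv0 HZc2 Hx). }
    assert (HZ : forall x, Rabs (G1a x - G1b x) <= 2 * cu * M2).
    { intros x. eapply Rle_trans. apply (G_Z T H E l1 u1 hb1 C cl cu HE Hsa1 Hcomp1 HcuR v Zc1 Zc2 x Hv0 HZc1 HZc2).
      assert (E (fun o => Rabs (Zc1 o - Zc2 o)) <= 2 * M2).
      { pose proof (HM2 v Hv). pose proof (HM1 v Hv).
        pose proof (E_diff H E HE (Yb1 v) (Yb2 v) (HinYb1 v Hv0) (HinYb2 v Hv0)).
        eapply Rle_trans. apply (E_mono_c H E HE _ (fun o => Rabs (Yb1 v o - Yb2 v o)) (Rabs (A - B))).
        apply Habs. apply (H_sub H E HE); auto.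
        apply Habs. apply (H_sub H E HE); auto.
        intros o. unfold Zc1, Zc2.
        replace (Yb1 v o - A - (Yb2 v o - B)) with ((Yb1 v o - Yb2 v o) + (B - A)) by ring.
        eapply Rle_trans. apply Rabs_triang. rewrite <- (Rabs_Ropp (B - A)).
        replace (- (B - A)) with (A - B) by ring. lra.
        fold A B in H2. lra. }
      nra. }
    set (x0 := Lof E hb1 l1 v (Yb2 v)). set (x1 := Uof E hb1 u1 v (Yb2 v)).
    assert (Hx0 : G1b x0 = l1 v).
    { unfold x0, Lof. rewrite Hbar1. apply inv_at_spec. apply (surj G1b cl cu); auto. }
    assert (Hx1 : G1b x1 = u1 v).
    { unfold x1, Uof. rewrite Hbar1. apply inv_at_spec. apply (surj G1b cl cu); auto. }
    pose proof (HM3 v Hv) as H3. fold x0 x1 in H3.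
    rewrite !Hbar2 in H3.
    replace (Hbar E hb1 v x0 (Yb2 v)) with (G1b x0) in H3 by (rewrite <- Hbar1; reflexivity).
    replace (Hbar E hb1 v x1 (Yb2 v)) with (G1b x1) in H3 by (rewrite <- Hbar1; reflexivity).
    pose proof (Rmax_l (Rabs (G1b x0 - G2 x0)) (Rabs (G1b x1 - G2 x1))).
    pose proof (Rmax_r (Rabs (G1b x0 - G2 x0)) (Rabs (G1b x1 - G2 x1))).
    pose proof (HM4 v Hv) as H4.
    pose proof (Rmax_l (Rabs (l1 v - l2 v)) (Rabs (u1 v - u2 v))).
    pose proof (Rmax_r (Rabs (l1 v - l2 v)) (Rabs (u1 v - u2 v))).
    destruct (cross_real G1a G1b G2 cl cu A B M1 M2 M3 M4 x0 x1 (l1 v) (l2 v) (u1 v) (u2 v)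
      Hcl HcuR HM1p HM2p HM3p HM4p S1a (fun x x' Hx => proj1 (S1b' x x' Hx)) S2 HZ
      Hx0 ltac:(lra) Hx1 ltac:(lra) ltac:(lra) ltac:(lra) (HM1 v Hv)) as [Ca [Cb [Cc Cd]]].
    fold Dl in Ca, Cb, Cc, Cd.
    repeat split; intros y Hy; rewrite ?Hg1, ?Hg2 in *.
    - apply Ca; auto.
    - apply Cb; auto.
    - apply Cc; auto.
    - apply Cd; auto. }
  assert (HF1 : forall v, 0 <= v <= T -> F1 v = g1 v (R1 T - R1 v)).
  { intros v Hv. unfold F1, g1. apply (G_eq T H E l1 u1 hb1 C cl cu HE Hsa1 Hcomp1 HcuR); auto. }
  assert (HF2 : forall v, 0 <= v <= T -> F2 v = g2 v (R2 T - R2 v)).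
  { intros v Hv. unfold F2, g2. apply (G_eq T H E l2 u2 hb2 C cl cu HE Hsa2 Hcomp2 HcuR); auto. }
  assert (Hs1 : forall v y y', 0 <= v <= T -> y <= y' -> g1 v y + cl * (y' - y) <= g1 v y').
  { intros v y y' Hv Hy. apply (G_slope T H E l1 u1 hb1 C cl cu HE Hsa1 Hcomp1 v (Yb1 v) y y' Hv (HinYb1 v Hv) Hy). }
  assert (Hs2 : forall v y y', 0 <= v <= T -> y <= y' -> g2 v y + cl * (y' - y) <= g2 v y').
  { intros v y y' Hv Hy. apply (G_slope T H E l2 u2 hb2 C cl cu HE Hsa2 Hcomp2 v (Yb2 v) y y' Hv (HinYb2 v Hv) Hy). }
  assert (A1 : (R1 T - R1 t) - (R2 T - R2 t) <= Dl).
  { apply (skor_half T t Dl cl R1 R2 F1 F2 l1 u1 l2 u2 g1 g2); auto.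
    - intros v Hv. apply (proj1 (Hcross v Hv)).
    - intros v Hv. apply (proj1 (proj2 (Hcross v Hv))).
    - intros v Hv. apply (Hbd1 v Hv).
    - intros v Hv. apply (Hbd2 v Hv).
    - apply (F_cont T H E F l1 u1 hb1 C cl cu l1 Y1 HE Hsa1 Hcomp1 HcuR HF HY1 Hl1c).
    - apply (F_cont T H E F l2 u2 hb2 C cl cu u2 Y2 HE Hsa2 Hcomp2 HcuR HF HY2 Hu2c). }
  assert (A2 : (R2 T - R2 t) - (R1 T - R1 t) <= Dl).
  { apply (skor_half T t Dl cl R2 R1 F2 F1 l2 u2 l1 u1 g2 g1); auto.
    - intros v Hv. apply (proj1 (proj2 (proj2 (Hcross v Hv)))).
    - intros v Hv. apply (proj2 (proj2 (proj2 (Hcross v Hv)))).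
    - intros v Hv. apply (Hbd2 v Hv).
    - intros v Hv. apply (Hbd1 v Hv).
    - apply (F_cont T H E F l2 u2 hb2 C cl cu l2 Y2 HE Hsa2 Hcomp2 HcuR HF HY2 Hl2c).
    - apply (F_cont T H E F l1 u1 hb1 C cl cu u1 Y1 HE Hsa1 Hcomp1 HcuR HF HY1 Hu1c). }
  fold Dl. rabs; lra.
Qed.
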